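(* Let $C$ be a program of the probabilistic guarded command language pProgs, let $k\in\mathbb{R}_{\geq 0}$ with $\mathbf{k}=\lambda\sigma.\,k$ the corresponding constant run-time, let $r\in\mathbb{R}_{\geq 0}$, and let $f,g\in\mathbb{T}$ be run-times. Then: (1) (Monotonicity) $f\preceq g$ implies $\mathsf{ert}[C](f)\preceq\mathsf{ert}[C](g)$; (2) (Propagation of constants) if $C$ is $\mathtt{halt}$-free, then $\mathsf{ert}[C](\mathbf{k}+f)=\mathbf{k}+\mathsf{ert}[C](f)$; (3) (Preservation of $\infty$) if $C$ is $\mathtt{halt}$-free, then $\mathsf{ert}[C](\boldsymbol{\infty})=\boldsymbol{\infty}$, where $\boldsymbol{\infty}=\lambda\sigma.\,\infty$; (4) (Sub-additivity) if $C$ is fully probabilistic (contains no non-deterministic choice $\{C_1\}\,\square\,\{C_2\}$), then $\mathsf{ert}[C](f+g)\preceq\mathsf{ert}[C](f)+\mathsf{ert}[C](g)$; (5) (Scaling) $\mathsf{ert}[C](r\cdot f)\succeq\min\{1,r\}\cdot\mathsf{ert}[C](f)$ and $\mathsf{ert}[C](r\cdot f)\preceq\max\{1,r\}\cdot\mathsf{ert}[C](f)$.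
   Context: Programs $C\in$ pProgs are generated by the grammar $C ::= \mathtt{empty} \mid \mathtt{skip} \mid \mathtt{halt} \mid x :\approx \mu \mid C;C \mid \{C\}\,\square\,\{C\} \mid \mathtt{if}\,(\xi)\,\{C\}\,\mathtt{else}\,\{C\} \mid \mathtt{while}\,(\xi)\,\{C\}$, where $x$ is a program variable, $\mu$ a distribution expression and $\xi$ a distribution expression over truth values (probabilistic guard). A program state $\sigma$ maps program variables to values; $\Sigma$ is the set of states. Each distribution expression $\mu$ has an interpretation $[\![\mu]\!]:\Sigma\to\mathcal{D}(\mathsf{Vals})$ assigning to each state a discrete probability distribution of total mass 1 over values; $[\mu:v](\sigma)$ denotes the probability that $[\![\mu]\!](\sigma)$ assigns to $v$, so $[\xi:\mathsf{false}]=1-[\xi:\mathsf{true}]$. Run-times are the functions $\mathbb{T}=\{f\mid f:\Sigma\to\mathbb{R}_{\geq0}\cup\{\infty\}\}$, ordered pointwise by $f\preceq g$ iff $f(\sigma)\le g(\sigma)$ for all $\sigma$; arithmetic on run-times is pointwise (with $0\cdot\infty=0$). The expected run-time transformer $\mathsf{ert}[C]:\mathbb{T}\to\mathbb{T}$ is defined by: $\mathsf{ert}[\mathtt{empty}](f)=f$; $\mathsf{ert}[\mathtt{skip}](f)=\mathbf{1}+f$; $\mathsf{ert}[\mathtt{halt}](f)=\mathbf{0}$; $\mathsf{ert}[x:\approx\mu](f)=\mathbf{1}+\lambda\sigma.\sum_v [\![\mu]\!](\sigma)(v)\cdot f(\sigma[x/v])$; $\mathsf{ert}[C_1;C_2](f)=\mathsf{ert}[C_1](\mathsf{ert}[C_2](f))$;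 $\mathsf{ert}[\{C_1\}\square\{C_2\}](f)=\max\{\mathsf{ert}[C_1](f),\mathsf{ert}[C_2](f)\}$ (pointwise); $\mathsf{ert}[\mathtt{if}(\xi)\{C_1\}\mathtt{else}\{C_2\}](f)=\mathbf{1}+[\xi:\mathsf{true}]\cdot\mathsf{ert}[C_1](f)+[\xi:\mathsf{false}]\cdot\mathsf{ert}[C_2](f)$; $\mathsf{ert}[\mathtt{while}(\xi)\{C'\}](f)=\mathrm{lfp}\,X.\ \mathbf{1}+[\xi:\mathsf{false}]\cdot f+[\xi:\mathsf{true}]\cdot\mathsf{ert}[C'](X)$ (least fixed point w.r.t. $\preceq$). Here $\mathbf{c}=\lambda\sigma.\,c$ denotes a constant run-time. *)

(* Defs.v *)
From HB Require Import structures.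
From mathcomp Require Import all_boot all_order all_algebra.
From mathcomp Require Import all_classical all_reals.
From mathcomp Require Import ereal esum.
Set Implicit Arguments. Unset Strict Implicit. Unset Printing Implicit Defensive.
Import Order.TTheory GRing.Theory Num.Theory.
Local Open Scope ring_scope.
Local Open Scope classical_set_scope.

Record distr (R : realType) (T : choiceType) := Distr {
  pmf : T -> R;
  pmf_ge0 : forall t, 0 <= pmf t;
  pmf_sum1 : (\esum_(t in [set: T]) (pmf t)%:E = 1)%E }.

Section Syntax.
Variables (R : realType) (Var : eqType) (Val : choiceType).

Definition state := Var -> Val.

Definition upd (s : state) (x : Var) (v : Val) : state :=
  fun y => if y == x then v else s y.

(* Distribution expressions are identified with their interpretations
   [[mu]] : Sigma -> D(Vals); guards are distribution expressions over bool. *)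
Inductive prog : Type :=
  | Empty
  | Skip
  | Halt
  | Assign of Var & (state -> distr R Val)
  | Seq of prog & prog
  | Choice of prog & prog
  | Ite of (state -> distr R bool) & prog & prog
  | While of (state -> distr R bool) & prog.

(* run-times (intended to be nonnegative): Sigma -> [0, +oo] *)
Definition runtime := state -> \bar R.

(* least fixed point w.r.t. the pointwise order on run-times (Knaster-Tarski:
   pointwise infimum of all pre-fixed run-times) *)
Definition lfp (Phi : runtime -> runtime) : runtime :=
  fun s => ereal_inf [set X s | X in
    [set X : runtime | (forall t, (0 <= X t)%E) /\ (forall t, (Phi X t <= X t)%E)]].

Local Open Scope ereal_scope.

Fixpoint ert (C : prog) (f : runtime) {struct C} : runtime :=
  match C with
  | Empty => f
  | Skip => fun s => 1 + f s
  | Halt => fun _ => 0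
  | Assign x mu => fun s =>
      1 + \esum_(v in [set: Val]) ((pmf (mu s) v)%:E * f (upd s x v))
  | Seq C1 C2 => ert C1 (ert C2 f)
  | Choice C1 C2 => fun s => maxe (ert C1 f s) (ert C2 f s)
  | Ite xi C1 C2 => fun s =>
      1 + (pmf (xi s) true)%:E * ert C1 f s + (pmf (xi s) false)%:E * ert C2 f s
  | While xi C' =>
      lfp (fun X s => 1 + (pmf (xi s) false)%:E * f s
                        + (pmf (xi s) true)%:E * ert C' X s)
  end.

Fixpoint halt_free (C : prog) : bool :=
  match C with
  | Empty | Skip | Assign _ _ => true
  | Halt => false
  | Seq C1 C2 | Choice C1 C2 | Ite _ C1 C2 => halt_free C1 && halt_free C2
  | While _ C' => halt_free C'
  end.

Fixpoint fully_probabilistic (C : prog) : bool :=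
  match C with
  | Empty | Skip | Halt | Assign _ _ => true
  | Choice _ _ => false
  | Seq C1 C2 | Ite _ C1 C2 => fully_probabilistic C1 && fully_probabilistic C2
  | While _ C' => fully_probabilistic C'
  end.

End Syntax.

(* Main.v *)
Require Import Defs.
From HB Require Import structures.
From mathcomp Require Import all_boot all_order all_algebra.
From mathcomp Require Import all_classical all_reals.
From mathcomp Require Import ereal esum.
From mathcomp Require Import lra.
Import Order.TTheory GRing.Theory Num.Theory.
Local Open Scope ring_scope.

Section Proofs.
Variables (R : realType) (Var : eqType) (Val : choiceType).
Local Notation RT := (runtime R Var Val).
Local Open Scope ereal_scope.

Lemma pmf_bool (d : distr R bool) : (pmf d true + pmf d false = 1)%R.
Proof.
have := pmf_sum1 d.
rewrite (_ : setT = ([set true] `|` [set false])%classic); last first.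
  by apply/seteqP; split => -[] //=; [left|right].
rewrite esum_fset; last 2 first.
- exact: finite_finset.
- by move=> i _; rewrite lee_fin pmf_ge0.
rewrite fsbigU ?fsbig_set1//; try exact: finite_finset.
all: try (by move=> x [/= -> ]).
by move=> h; apply: EFin_inj; rewrite EFinD; exact: h.
Qed.

Lemma ge0_ooVfin {x : \bar R} : 0 <= x -> x = +oo \/ x \is a fin_num.
Proof.
move=> x0; case: x x0 => [r| |] //=; by [right|left].
Qed.

Lemma esumZ (T : choiceType) (S : set T) (c : R) (a : T -> \bar R) :
  (0 <= c)%R -> (forall x, 0 <= a x) ->
  \esum_(i in S) (c%:E * a i) = c%:E * \esum_(i in S) a i.
Proof.
move=> c0 a0; rewrite /esum -ereal_supZl //; last first.
  by apply/set0P; exists 0; exists set0; [exact: fsets_set0|rewrite fsbig_set0].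
congr ereal_sup; rewrite image_comp; apply: eq_imagel => A _ /=.
by rewrite ge0_mule_fsumr.
Qed.

Definition pre (Phi : RT -> RT) (X : RT) :=
  (forall t, 0 <= X t) /\ (forall t, Phi X t <= X t).

Lemma lfp_le (Phi : RT -> RT) X s : pre Phi X -> lfp Phi s <= X s.
Proof. by move=> [h1 h2]; apply: ereal_inf_lbound; exists X. Qed.

Lemma lfp_ge (Phi : RT -> RT) c s : (forall X, pre Phi X -> c <= X s) -> c <= lfp Phi s.
Proof. by move=> h; apply: le_ereal_inf_tmp => _ [X HX <-]; exact: h. Qed.

Lemma lfp_ge0 (Phi : RT -> RT) s : 0 <= lfp Phi s.
Proof. by apply: lfp_ge => X [h _]. Qed.

Lemma lfp_addl (Phi : RT -> RT) (a : R) c s : (forall X, pre Phi X -> c <= a%:E + X s) ->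
  c <= a%:E + lfp Phi s.
Proof.
move=> h; have [->|fin] := ge0_ooVfin (lfp_ge0 Phi s).
  by rewrite addey // leey.
rewrite -lee_subel_addl //; apply: lfp_ge => X HX.
have [->|finX] := ge0_ooVfin (proj1 HX s); first exact: leey.
by rewrite lee_subel_addl //; exact: h.
Qed.

Lemma lfp_add (P1 P2 : RT -> RT) c s :
  (forall X Y, pre P1 X -> pre P2 Y -> c <= X s + Y s) ->
  c <= lfp P1 s + lfp P2 s.
Proof.
move=> h.
have [->|f1] := ge0_ooVfin (lfp_ge0 P1 s).
  by rewrite addye ?leey // gt_eqF // (lt_le_trans _ (lfp_ge0 P2 s)) ?ltNy0.
have [->|f2] := ge0_ooVfin (lfp_ge0 P2 s).
  by rewrite addey ?leey // gt_eqF // (lt_le_trans _ (lfp_ge0 P1 s)) ?ltNy0.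
rewrite -lee_subel_addl //; apply: lfp_ge => Y HY.
have [->|fY] := ge0_ooVfin (proj1 HY s); first exact: leey.
rewrite lee_subel_addl // -lee_subel_addr //; apply: lfp_ge => X HX.
have [->|fX] := ge0_ooVfin (proj1 HX s); first exact: leey.
by rewrite lee_subel_addr //; exact: h.
Qed.

Definition Phi (xi : state Var Val -> distr R bool) (C : prog R Var Val) (f : RT) : RT -> RT :=
  fun X s => 1 + (pmf (xi s) false)%:E * f s + (pmf (xi s) true)%:E * ert C X s.

Lemma ert_While xi (C : prog R Var Val) (f : RT) : ert (While xi C) f = lfp (Phi xi C f).
Proof. by []. Qed.

Lemma ert_mono (C : prog R Var Val) : forall f g, (forall s, f s <= g s) ->
  forall s, ert C f s <= ert C g s.
Proof.
elim: C => [||| x mu | C1 IH1 C2 IH2 | C1 IH1 C2 IH2 | xi C1 IH1 C2 IH2 | xi C IH]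
  f g fg s /=.
- exact: fg.
- by rewrite leeD2l.
- by [].
- rewrite leeD2l // le_esum // => v _; apply: lee_wpmul2l => //.
  by rewrite lee_fin pmf_ge0.
- by apply: IH1; apply: IH2.
- by rewrite ge_max !le_max IH1 // IH2 // orbT.
- by rewrite leeD // ?leeD2l // lee_wpmul2l ?lee_fin ?pmf_ge0 // ?IH1 ?IH2.
- apply: lfp_ge => X [X0 HX]; apply: lfp_le; split => // t.
  apply: le_trans (HX t); rewrite /Phi leeD2r // leeD2l //.
  by rewrite lee_wpmul2l ?lee_fin ?pmf_ge0.
Qed.

Lemma ert_ge0 (C : prog R Var Val) : forall f, (forall s, 0 <= f s) -> forall s, 0 <= ert C f s.
Proof.
elim: C => [||| x mu | C1 IH1 C2 IH2 | C1 IH1 C2 IH2 | xi C1 IH1 C2 IH2 | xi C IH]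
  f f0 s /=.
- exact: f0.
- by rewrite adde_ge0.
- by [].
- rewrite adde_ge0 // esum_ge0 // => v _; rewrite mule_ge0 ?lee_fin ?pmf_ge0 //.
- by apply: IH1; apply: IH2.
- by rewrite le_max IH1.
- by rewrite !adde_ge0 // mule_ge0 ?lee_fin ?pmf_ge0 // ?IH1 ?IH2.
- exact: lfp_ge0.
Qed.

Lemma ite_alg (p q k : R) (A B : \bar R) : (0 <= p)%R -> (0 <= q)%R -> (p + q = 1)%R ->
  (0 <= k)%R -> 0 <= A -> 0 <= B ->
  1 + p%:E * (k%:E + A) + q%:E * (k%:E + B) = k%:E + (1 + p%:E * A + q%:E * B).
Proof.
move=> p0 q0 pq k0 A0 B0.
rewrite !ge0_muleDr ?lee_fin // -!EFinM.
rewrite (addeCA 1) -addeA (addeCA (1 + _)) addeA -EFinD -mulrDl pq mul1r.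
by rewrite addeA.
Qed.

Lemma maxeDl (k : R) (a b : \bar R) : maxe (k%:E + a) (k%:E + b) = k%:E + maxe a b.
Proof.
have [ab|ba] := leP a b.
  by rewrite !max_r // leeD2l.
by rewrite !max_l // ?leeD2l // ltW.
Qed.

Lemma pmf_bool' (d : distr R bool) : (pmf d false + pmf d true = 1)%R.
Proof. by rewrite addrC pmf_bool. Qed.

Lemma sub_alg (p q : R) (a b c d : \bar R) : (0 <= p)%R -> (0 <= q)%R ->
  0 <= a -> 0 <= b -> 0 <= c -> 0 <= d ->
  1 + p%:E * (a + b) + q%:E * (c + d) <= (1 + p%:E * a + q%:E * c) + (1 + p%:E * b + q%:E * d).
Proof.
move=> p0 q0 a0 b0 c0 d0.
rewrite !ge0_muleDr ?lee_fin // [1 + (_ + _)]addeA [X in X <= _]addeACA; apply: leeD2l; rewrite -addeA.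
by apply: lee_paddl.
Qed.
Lemma ert_const (C : prog R Var Val) : halt_free C -> forall (k : R) (f : RT),
  (0 <= k)%R -> (forall s, 0 <= f s) ->
  ert C (fun s => k%:E + f s) = (fun s => k%:E + ert C f s).
Proof.
elim: C => [||| x mu | C1 IH1 C2 IH2 | C1 IH1 C2 IH2 | xi C1 IH1 C2 IH2 | xi C IH]
  /= hf k f k0 f0.
- by [].
- by apply/funext => s; rewrite addeCA.
- by [].
- apply/funext => s.
  rewrite (@eq_esum _ _ _ _ (fun v => (pmf (mu s) v * k)%:E
     + (pmf (mu s) v)%:E * f (upd s x v))); last first.
    by move=> v _; rewrite ge0_muleDr ?lee_fin ?pmf_ge0 // EFinM.
  rewrite esumD; last 2 first.
  + by move=> v _; rewrite lee_fin mulr_ge0 ?pmf_ge0.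
  + by move=> v _; rewrite mule_ge0 ?lee_fin ?pmf_ge0.
  rewrite (@eq_esum _ _ _ _ (fun v => k%:E * (pmf (mu s) v)%:E)); last first.
    by move=> v _; rewrite mulrC EFinM.
  rewrite esumZ //; last by move=> v; rewrite lee_fin pmf_ge0.
  by rewrite pmf_sum1 mule1 addeCA.
- move/andP: hf => [h1 h2].
  rewrite IH2 // IH1 //; exact: ert_ge0.
- move/andP: hf => [h1 h2]; apply/funext => s.
  by rewrite IH1 // IH2 // maxeDl.
- move/andP: hf => [h1 h2]; apply/funext => s.
  rewrite IH1 // IH2 // ite_alg ?pmf_ge0 ?pmf_bool //.
  + exact: ert_ge0.
  + exact: ert_ge0.
- change (lfp (Phi xi C (fun s => k%:E + f s)) = fun s => k%:E + lfp (Phi xi C f) s).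
  apply/funext => s; apply/eqP; rewrite eq_le; apply/andP; split.
  + apply: (@lfp_addl (Phi xi C f) k) => Y [Y0 HY]; apply: (@lfp_le _ (fun t => k%:E + Y t)); split => t.
      by rewrite adde_ge0.
    rewrite /Phi IH // ite_alg ?pmf_ge0 ?pmf_bool' //; last exact: ert_ge0.
    by apply: leeD2l; exact: HY.
  + apply: lfp_ge => X [X0 HX].
    have Xk : forall t, k%:E <= X t.
      pose m := ereal_inf (range X).
      have m0 : 0 <= m by apply: le_ereal_inf_tmp => _ [t _ <-].
      have mX : forall t, m <= X t by move=> t; apply: ereal_inf_lbound; exists t.
      suff km : k%:E <= m by move=> t; exact: le_trans (mX t).
      rewrite leNgt; apply/negP => mk.
      have mfin : m \is a fin_num by rewrite ge0_fin_numE // (lt_trans mk) ?ltry.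
      have mE : m = (fine m)%:E by rewrite fineK.
      have h1 : forall t, m <= ert C X t.
        move=> t; apply: le_trans (@ert_mono C (fun _ => m) X mX t).
        have -> : (fun _ : state Var Val => m) = (fun s => (fine m)%:E + (fun _ => 0) s).
          by apply/funext => ?; rewrite adde0 fineK.
        rewrite IH //; last by rewrite -lee_fin -mE.
        by rewrite -mE leeDl // ert_ge0.
      have h2 : forall t, m + 1 <= X t.
        move=> t; apply: le_trans (HX t); rewrite /Phi.
        have -> : m + 1 = 1 + (pmf (xi t) false)%:E * m + (pmf (xi t) true)%:E * m.
          rewrite mE -!EFinM -!EFinD; congr EFin.
          by rewrite -addrA -mulrDl pmf_bool' mul1r addrC.
        apply: leeD; last by apply: lee_wpmul2l; rewrite ?lee_fin ?pmf_ge0.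
        apply: leeD2l; apply: lee_wpmul2l; first by rewrite lee_fin pmf_ge0.
        by apply: lee_paddr => //; exact: ltW.
      have : m + 1 <= m by apply: le_ereal_inf_tmp => _ [t _ <-]; exact: h2.
      by rewrite mE -EFinD lee_fin; lra.
    pose Y := fun t => X t - k%:E.
    have XY : X = fun t => k%:E + Y t by apply/funext => t; rewrite /Y addeC subeK.
    have Y0 : forall t, 0 <= Y t by move=> t; rewrite /Y sube_ge0 ?Xk.
    clearbody Y; subst X.
    apply: leeD2l; apply: lfp_le; split => // t.
    have := HX t; rewrite /Phi IH // ite_alg ?pmf_ge0 ?pmf_bool' //; last exact: ert_ge0.
    by rewrite leeD2lE.
Qed.

Lemma ert_ge_cst (C : prog R Var Val) (X : RT) (r : R) : halt_free C -> (0 <= r)%R ->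
  (forall t, r%:E <= X t) -> forall t, r%:E <= ert C X t.
Proof.
move=> hf r0 rX t; apply: le_trans (@ert_mono C (fun _ => r%:E) X rX t).
have -> : (fun _ : state Var Val => r%:E) = (fun s => r%:E + (fun _ => 0) s).
  by apply/funext => ?; rewrite adde0.
rewrite ert_const // leeDl // ert_ge0 //.
Qed.

Lemma pmf_pos {T : choiceType} (d : distr R T) : exists v, (0 < pmf d v)%R.
Proof.
case: (pselect (exists v, (0 < pmf d v)%R)) => // hn; exfalso.
have := pmf_sum1 d; rewrite esum1; first by move/eqP; rewrite eq_sym eqe oner_eq0.
move=> v _; suff -> : pmf d v = 0%R by [].
apply/eqP; rewrite eq_le pmf_ge0 andbT leNgt; apply/negP => hv; apply: hn; by exists v.
Qed.

Lemma ert_inf (C : prog R Var Val) : halt_free C ->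
  ert C (fun _ => +oo) = (fun _ => +oo).
Proof.
elim: C => [||| x mu | C1 IH1 C2 IH2 | C1 IH1 C2 IH2 | xi C1 IH1 C2 IH2 | xi C IH]
  /= hf.
- by [].
- by apply/funext => s; rewrite addey.
- by [].
- apply/funext => s; have [v pv] := pmf_pos (mu s).
  suff -> : \esum_(v in [set: Val]) ((pmf (mu s) v)%:E * +oo) = +oo by rewrite addey.
  apply/eqP; rewrite -leye_eq; apply: esum_ge; exists [set v]%classic.
    by split; [exact: finite_set1|by []].
  by rewrite fsbig_set1 gt0_muley // lte_fin.
- move/andP: hf => [h1 h2]; by rewrite IH2 // IH1.
- move/andP: hf => [h1 h2]; apply/funext => s; by rewrite IH1 // IH2 // maxxx.
- move/andP: hf => [h1 h2]; apply/funext => s; rewrite IH1 // IH2 //.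
  have [pt0|] := ltP 0%R (pmf (xi s) true).
    by rewrite gt0_muley ?lte_fin // addey // addye // gt_eqF // (lt_le_trans _ (mule_ge0 _ _)) ?ltNy0 ?lee_fin ?pmf_ge0.
  move=> pt0; have -> : pmf (xi s) false = 1%R.
    by have := pmf_bool (xi s); have := pmf_ge0 (xi s) true; lra.
  by rewrite mul1e addey // gt_eqF // (lt_le_trans ltNy0) // adde_ge0 // mule_ge0 ?lee_fin ?pmf_ge0.
- change (lfp (Phi xi C (fun _ => +oo)) = fun _ => +oo).
  apply/funext => s; apply/eqP; rewrite -leye_eq; apply: lfp_ge => X [X0 HX].
  pose m := ereal_inf (range X).
  have m0 : 0 <= m by apply: le_ereal_inf_tmp => _ [t _ <-].
  have mX : forall t, m <= X t by move=> t; apply: ereal_inf_lbound; exists t.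
  suff mo : m = +oo by rewrite -mo.
  have [//|mfin] := ge0_ooVfin m0; exfalso.
  have mE : m = (fine m)%:E by rewrite fineK.
  have h1 : forall t, m <= ert C X t.
    by rewrite mE; apply: ert_ge_cst => //; rewrite -?mE // -lee_fin -mE.
  have h2 : forall t, m + 1 <= X t.
    move=> t; apply: le_trans (HX t); rewrite /Phi.
    have [pf0|] := ltP 0%R (pmf (xi t) false).
      rewrite gt0_muley ?lte_fin // addey // addye ?leey //.
      by rewrite gt_eqF // (lt_le_trans _ (mule_ge0 _ _)) ?ltNy0 ?lee_fin ?pmf_ge0 ?ert_ge0.
    move=> pf0; have -> : pmf (xi t) true = 1%R.
      by have := pmf_bool (xi t); have := pmf_ge0 (xi t) false; lra.
    have -> : pmf (xi t) false = 0%R.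
      by apply/eqP; rewrite eq_le pf0 pmf_ge0.
    by rewrite mul0e adde0 mul1e addeC leeD2l.
  have : m + 1 <= m by apply: le_ereal_inf_tmp => _ [t _ <-]; exact: h2.
  by rewrite mE -EFinD lee_fin; lra.
Qed.

Lemma skip_alg (a b : \bar R) : 0 <= a -> 0 <= b -> 1 + (a + b) <= (1 + a) + (1 + b).
Proof. by move=> a0 b0; rewrite addeACA; apply: leeD2r; rewrite leeDl. Qed.

Lemma scale_alg (a p q : R) (A B : \bar R) : (0 <= a)%R -> (0 <= p)%R -> (0 <= q)%R ->
  0 <= A -> 0 <= B ->
  a%:E * (1 + p%:E * A + q%:E * B) = a%:E + p%:E * (a%:E * A) + q%:E * (a%:E * B).
Proof.
move=> a0 p0 q0 A0 B0.
rewrite ge0_muleDr ?ge0_muleDr ?mule1 ?(muleCA a%:E) //.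
- by rewrite mule_ge0.
- by rewrite adde_ge0 // mule_ge0.
- by rewrite mule_ge0.
Qed.

Lemma ert_subadd (C : prog R Var Val) : fully_probabilistic C ->
  forall f g : RT, (forall s, 0 <= f s) -> (forall s, 0 <= g s) ->
  forall s, ert C (fun t => f t + g t) s <= ert C f s + ert C g s.
Proof.
elim: C => [||| x mu | C1 IH1 C2 IH2 | C1 IH1 C2 IH2 | xi C1 IH1 C2 IH2 | xi C IH]
  /= hf f g f0 g0 s.
- by [].
- exact: skip_alg.
- by rewrite adde0.
- rewrite (@eq_esum _ _ _ _ (fun v => (pmf (mu s) v)%:E * f (upd s x v)
     + (pmf (mu s) v)%:E * g (upd s x v))); last first.
    by move=> v _; rewrite ge0_muleDr ?lee_fin ?pmf_ge0.
  rewrite esumD; last 2 first.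
  + by move=> v _; rewrite mule_ge0 ?lee_fin ?pmf_ge0.
  + by move=> v _; rewrite mule_ge0 ?lee_fin ?pmf_ge0.
  by apply: skip_alg; apply: esum_ge0 => v _; rewrite mule_ge0 ?lee_fin ?pmf_ge0.
- move/andP: hf => [h1 h2].
  apply: (le_trans _ (IH1 h1 _ _ (ert_ge0 C2 _ f0) (ert_ge0 C2 _ g0) s)).
  by apply: ert_mono => t; apply: IH2.
- by [].
- move/andP: hf => [h1 h2].
  apply: (le_trans _ (sub_alg _ _ _ _ _ _ _ _ _ _ _ _)); rewrite ?pmf_ge0 ?ert_ge0 //.
  apply: leeD; first apply: leeD2l.
    by apply: lee_wpmul2l; rewrite ?lee_fin ?pmf_ge0 ?IH1.
  by apply: lee_wpmul2l; rewrite ?lee_fin ?pmf_ge0 ?IH2.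
- change (lfp (Phi xi C (fun t => f t + g t)) s <= lfp (Phi xi C f) s + lfp (Phi xi C g) s).
  apply: lfp_add => X Y [X0 HX] [Y0 HY].
  apply: (@lfp_le _ (fun t => X t + Y t)); split => t; first by rewrite adde_ge0.
  apply: le_trans (leeD (HX t) (HY t)); rewrite /Phi.
  apply: (le_trans _ (sub_alg _ _ _ _ _ _ _ _ _ _ _ _)); rewrite ?pmf_ge0 ?ert_ge0 //.
  apply: leeD2l.
  by apply: lee_wpmul2l; rewrite ?lee_fin ?pmf_ge0 ?IH.
Qed.

Lemma ert_lower (C : prog R Var Val) : forall (a r : R) (f : RT),
  (0 <= a)%R -> (a <= 1)%R -> (a <= r)%R -> (forall s, 0 <= f s) ->
  forall s, a%:E * ert C f s <= ert C (fun t => r%:E * f t) s.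
Proof.
elim: C => [||| x mu | C1 IH1 C2 IH2 | C1 IH1 C2 IH2 | xi C1 IH1 C2 IH2 | xi C IH]
  /= a r f a0 a1 ar f0 s.
- by apply: lee_wpmul2r; rewrite ?lee_fin.
- rewrite ge0_muleDr // mule1; apply: leeD; first by rewrite lee_fin.
  by apply: lee_wpmul2r; rewrite ?lee_fin.
- by rewrite mule0.
- rewrite ge0_muleDr ?esum_ge0 // => [|v _]; last by rewrite mule_ge0 ?lee_fin ?pmf_ge0.
  rewrite mule1; apply: leeD; first by rewrite lee_fin.
  rewrite -esumZ //; last by move=> v; rewrite mule_ge0 ?lee_fin ?pmf_ge0.
  apply: le_esum => v _; rewrite muleCA; apply: lee_wpmul2l; first by rewrite lee_fin pmf_ge0.
  by apply: lee_wpmul2r; rewrite ?lee_fin.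
- apply: le_trans (IH1 a a _ a0 a1 (lexx _) (ert_ge0 C2 _ f0) s) _.
  by apply: ert_mono => t; apply: IH2.
- rewrite maxe_pMr // ?lee_fin // ge_max !le_max.
  by rewrite IH1 // IH2 // orbT.
- rewrite scale_alg ?pmf_ge0 ?ert_ge0 //; apply: leeD; first apply: leeD.
  + by rewrite lee_fin.
  + by apply: lee_wpmul2l; rewrite ?lee_fin ?pmf_ge0 ?IH1.
  + by apply: lee_wpmul2l; rewrite ?lee_fin ?pmf_ge0 ?IH2.
- change (a%:E * lfp (Phi xi C f) s <= lfp (Phi xi C (fun t => r%:E * f t)) s).
  have [a00|ap] := eqVneq a 0%R.
    by rewrite a00 mul0e lfp_ge0.
  have apos : (0 < a)%R by rewrite lt_neqAle eq_sym ap a0.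
  apply: lfp_ge => X [X0 HX].
  pose Y := fun t => (a^-1)%:E * X t.
  have XY : (fun t => a%:E * Y t) = X.
    by apply/funext => t; rewrite /Y muleA -EFinM mulfV // mul1e.
  have Y0 : forall t, 0 <= Y t by move=> t; rewrite mule_ge0 // lee_fin invr_ge0.
  have : lfp (Phi xi C f) s <= Y s.
    apply: lfp_le; split => // t; rewrite /Y lee_pdivlMl //.
    apply: le_trans (HX t); rewrite /Phi.
    rewrite scale_alg ?pmf_ge0 ?ert_ge0 //; apply: leeD; first apply: leeD.
    + by rewrite lee_fin.
    + apply: lee_wpmul2l; rewrite ?lee_fin ?pmf_ge0 //.
      by apply: lee_wpmul2r; rewrite ?lee_fin.
    + apply: lee_wpmul2l; rewrite ?lee_fin ?pmf_ge0 //.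
      rewrite -[Z in _ <= ert C Z t]XY.
      exact: IH.
  move=> h; apply: le_trans (lee_wpmul2l _ h) _; first by rewrite lee_fin.
  by rewrite /Y muleA -EFinM mulfV // mul1e.
Qed.

Lemma ert_upper (C : prog R Var Val) : forall (b r : R) (f : RT),
  (0 <= r)%R -> (r <= b)%R -> (1 <= b)%R -> (forall s, 0 <= f s) ->
  forall s, ert C (fun t => r%:E * f t) s <= b%:E * ert C f s.
Proof.
elim: C => [||| x mu | C1 IH1 C2 IH2 | C1 IH1 C2 IH2 | xi C1 IH1 C2 IH2 | xi C IH]
  /= b r f r0 rb b1 f0 s;
  have b0 : (0 <= b)%R by apply: le_trans b1.
- by apply: lee_wpmul2r; rewrite ?lee_fin.
- rewrite ge0_muleDr // mule1; apply: leeD; first by rewrite lee_fin.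
  by apply: lee_wpmul2r; rewrite ?lee_fin.
- by rewrite mule0.
- rewrite ge0_muleDr ?esum_ge0 // => [|v _]; last by rewrite mule_ge0 ?lee_fin ?pmf_ge0.
  rewrite mule1; apply: leeD; first by rewrite lee_fin.
  rewrite -esumZ //; last by move=> v; rewrite mule_ge0 ?lee_fin ?pmf_ge0.
  apply: le_esum => v _; rewrite [Z in _ <= Z]muleCA; apply: lee_wpmul2l; first by rewrite lee_fin pmf_ge0.
  by apply: lee_wpmul2r; rewrite ?lee_fin.
- apply: le_trans (IH1 b b _ b0 (lexx _) b1 (ert_ge0 C2 _ f0) s).
  by apply: ert_mono => t; apply: IH2.
- rewrite maxe_pMr // ?lee_fin // ge_max !le_max.
  by rewrite IH1 // IH2 // orbT.
- rewrite scale_alg ?pmf_ge0 ?ert_ge0 //; apply: leeD; first apply: leeD.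
  + by rewrite lee_fin.
  + by apply: lee_wpmul2l; rewrite ?lee_fin ?pmf_ge0 ?IH1.
  + by apply: lee_wpmul2l; rewrite ?lee_fin ?pmf_ge0 ?IH2.
- change (lfp (Phi xi C (fun t => r%:E * f t)) s <= b%:E * lfp (Phi xi C f) s).
  have bpos : (0 < b)%R by apply: lt_le_trans b1.
  rewrite -lee_pdivrMl //; apply: lfp_ge => Y [Y0 HY].
  rewrite lee_pdivrMl //.
  apply: (@lfp_le _ (fun t => b%:E * Y t)); split => t.
    by rewrite mule_ge0 ?lee_fin.
  apply: le_trans (lee_wpmul2l _ (HY t)); last by rewrite lee_fin.
  rewrite /Phi scale_alg ?pmf_ge0 ?ert_ge0 //; apply: leeD; first apply: leeD.
  + by rewrite lee_fin.
  + apply: lee_wpmul2l; rewrite ?lee_fin ?pmf_ge0 //.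
    by apply: lee_wpmul2r; rewrite ?lee_fin.
  + apply: lee_wpmul2l; rewrite ?lee_fin ?pmf_ge0 //.
    exact: IH.
Qed.

End Proofs.
Theorem theorem1 (R : realType) (Var : eqType) (Val : choiceType)
  (C : prog R Var Val) (k r : R) (f g : runtime R Var Val) :
  0 <= k -> 0 <= r ->
  (forall s, (0 <= f s)%E) -> (forall s, (0 <= g s)%E) ->
  (* (1) monotonicity *)
  ((forall s, (f s <= g s)%E) -> forall s, (ert C f s <= ert C g s)%E) /\
  (* (2) propagation of constants *)
  (halt_free C ->
     ert C (fun s => (k%:E + f s)%E) = (fun s => (k%:E + ert C f s)%E)) /\
  (* (3) preservation of infinity *)
  (halt_free C -> ert C (fun _ => +oo%E) = (fun _ => +oo%E)) /\
  (* (4) sub-additivity *)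
  (fully_probabilistic C ->
     forall s, (ert C (fun t => (f t + g t)%E) s <= ert C f s + ert C g s)%E) /\
  (* (5) scaling *)
  (forall s, ((Num.min 1 r)%:E * ert C f s <= ert C (fun t => (r%:E * f t)%E) s)%E) /\
  (forall s, (ert C (fun t => (r%:E * f t)%E) s <= (Num.max 1 r)%:E * ert C f s)%E).
Proof.
move=> k0 r0 f0 g0.
split; first by move=> fg s; exact: ert_mono.
split; first by move=> hf; apply: ert_const.
split; first by move=> hf; apply: ert_inf.
split; first by move=> hf s; apply: ert_subadd.
split => s.
- apply: ert_lower => //; rewrite ?ge_min ?le_min ?lexx ?orbT ?ler01 ?r0 //.
- apply: (@ert_upper _ _ _ C (Num.max 1 r) r f) => //; rewrite ?le_max ?ge_max ?lexx ?orbT //.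
Qed.
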